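(* Let $A$ be a finite-vertex graph, $\mathsf V$ a pseudovariety of semigroupoids containing $\mathsf N$, and $L\subseteq E(A^+)$ a factorial language. Suppose that $L$ is $\mathsf V$-recognizable or that $\mathsf V$ is concatenation-closed. Then the closure $\overline{L}$ of $L$ in $\overline{\Omega}_A\mathsf V$ is factorial in $\overline{\Omega}_A\mathsf V$: whenever $w=uv\in\overline L$ with $u,v$ edges of $\overline{\Omega}_A\mathsf V$, we have $u,v\in\overline L$.
   Context: A graph has vertices, edges and source/range maps; finite-vertex means finitely many vertices. Pseudovarieties of semigroupoids are classes of finite semigroupoids closed under divisors, finite direct products and finite coproducts; $\mathsf N$ is the pseudovariety of finite nilpotent semigroups. $\overline{\Omega}_A\mathsf V$ is the free pro-$\mathsf V$ semigroupoid over $A$; for $\mathsf V\supseteq\mathsf N$ the free semigroupoid $A^+$ of nonempty paths is identified with a dense subsemigroupoid of isolated points of it. A language $L\subseteq E(A^+)$ is factorial if $uv\in L$ implies $u,v\in L$; it is $\mathsf V$-recognizable if $L=\varphi^{-1}\varphi(L)$ for some homomorphism $\varphi\colon A^+\to F$, $F\in\mathsf V$. $\mathsf V$ is concatenation-closed if for every finite graph $A$ the $\mathsf V$-recognizable languages over $A$ are closed under concatenation (composable products $uv$ with $u\in L$, $v\in K$). *)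

(* Defs.v *)
From Stdlib Require List.
From mathcomp Require Import all_boot.
Set Implicit Arguments. Unset Strict Implicit. Unset Printing Implicit Defensive.

(* Finite semigroupoids.  Composition x y is meaningful (x : a -> b,         *)
(* y : b -> c) when scod x = sdom y; values on non-composable pairs are junk. *)
Record sgd := Sgd {
  sV : finType;
  sE : finType;
  sdom : sE -> sV;
  scod : sE -> sV;
  smul : sE -> sE -> sE;
  smul_dom : forall x y, scod x = sdom y -> sdom (smul x y) = sdom x;
  smul_cod : forall x y, scod x = sdom y -> scod (smul x y) = scod y;
  smul_assoc : forall x y z, scod x = sdom y -> scod y = sdom z ->
      smul (smul x y) z = smul x (smul y z) }.

Record shom (S T : sgd) := SHom {
  hmV : sV S -> sV T;
  hmE : sE S -> sE T;
  hm_dom : forall x, sdom (hmE x) = hmV (sdom x);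
  hm_cod : forall x, scod (hmE x) = hmV (scod x);
  hm_mul : forall x y, scod x = sdom y -> hmE (smul x y) = smul (hmE x) (hmE y) }.

Definition quotient_hom (S T : sgd) (f : shom S T) :=
  bijective (hmV f) /\ forall y : sE T, exists x, hmE f x = y.

Definition faithful_hom (S T : sgd) (f : shom S T) :=
  forall x y : sE S, sdom x = sdom y -> scod x = scod y -> hmE f x = hmE f y -> x = y.

Definition divides (S T : sgd) :=
  exists (R : sgd) (f : shom R S) (g : shom R T), quotient_hom f /\ faithful_hom g.

Section Prod.
Variables S T : sgd.
Definition pdom' (x : sE S * sE T) : sV S * sV T := (sdom x.1, sdom x.2).
Definition pcod' (x : sE S * sE T) : sV S * sV T := (scod x.1, scod x.2).
Definition pmul' (x y : sE S * sE T) : sE S * sE T := (smul x.1 y.1, smul x.2 y.2).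
Lemma pmul_dom x y : pcod' x = pdom' y -> pdom' (pmul' x y) = pdom' x.
Proof. by case=> h1 h2; rewrite /pdom' /= !smul_dom. Qed.
Lemma pmul_cod x y : pcod' x = pdom' y -> pcod' (pmul' x y) = pcod' y.
Proof. by case=> h1 h2; rewrite /pcod' /= !smul_cod. Qed.
Lemma pmul_assoc x y z : pcod' x = pdom' y -> pcod' y = pdom' z ->
  pmul' (pmul' x y) z = pmul' x (pmul' y z).
Proof. by case=> h1 h2 [h3 h4]; rewrite /pmul' /= !smul_assoc. Qed.
Definition prod_sgd : sgd :=
  @Sgd (sV S * sV T)%type (sE S * sE T)%type
       pdom' pcod' pmul' pmul_dom pmul_cod pmul_assoc.
End Prod.

Section Coprod.
Variables S T : sgd.
Definition cdom (x : sE S + sE T) : sV S + sV T :=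
  match x with inl a => inl (sdom a) | inr b => inr (sdom b) end.
Definition ccod (x : sE S + sE T) : sV S + sV T :=
  match x with inl a => inl (scod a) | inr b => inr (scod b) end.
Definition cmul (x y : sE S + sE T) : sE S + sE T :=
  match x, y with
  | inl a, inl b => inl (smul a b)
  | inr a, inr b => inr (smul a b)
  | _, _ => x end.
Lemma cmul_dom x y : ccod x = cdom y -> cdom (cmul x y) = cdom x.
Proof. by case: x; case: y => //= a b [] h; rewrite smul_dom. Qed.
Lemma cmul_cod x y : ccod x = cdom y -> ccod (cmul x y) = ccod y.
Proof. by case: x; case: y => //= a b [] h; rewrite smul_cod. Qed.
Lemma cmul_assoc x y z : ccod x = cdom y -> ccod y = cdom z ->
  cmul (cmul x y) z = cmul x (cmul y z).
Proof.
by case: x; case: y; case: z => //= a b c [] h1 [] h2; rewrite smul_assoc.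
Qed.
Definition coprod_sgd : sgd :=
  @Sgd (sV S + sV T)%type (sE S + sE T)%type
       cdom ccod cmul cmul_dom cmul_cod cmul_assoc.
End Coprod.

(* Pseudovariety of semigroupoids: closed under divisors, finite direct
   products and finite coproducts (binary ones suffice; the trivial and empty
   semigroupoids are divisors of any member). *)
Definition pseudovariety (V : sgd -> Prop) :=
  [/\ forall S T, V T -> divides S T -> V S,
      forall S T, V S -> V T -> V (prod_sgd S T)
    & forall S T, V S -> V T -> V (coprod_sgd S T)].

Definition nilpotent_semigroup (S : sgd) :=
  #|sV S| = 1 /\
  exists z : sE S, (forall x, smul z x = z /\ smul x z = z) /\
    exists n : nat, forall (x : sE S) (s : seq (sE S)), size s = n -> foldl (@smul S) x s = z.

Definition contains_N (V : sgd -> Prop) := forall S, nilpotent_semigroup S -> V S.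

Record graph := Graph {
  gV : finType;
  gE : Type;
  gdom : gE -> gV;
  gcod : gE -> gV }.

Definition finite_graph (A : graph) := exists s : seq (gE A), forall e, List.In e s.

(* Edges of A^+ : nonempty paths e_1 ... e_n with gcod e_i = gdom e_(i+1),
   represented as sequences of edges of A. *)
Definition adj (A : graph) : rel (gE A) := fun x y => gcod x == gdom y.
Definition valid (A : graph) (w : seq (gE A)) : bool :=
  if w is e :: w' then path (@adj A) e w' else false.

(* Homomorphisms A^+ -> F (only their values on genuine paths matter). *)
Record homA (A : graph) (F : sgd) := HomA {
  hv : gV A -> sV F;
  he : seq (gE A) -> sE F;
  homA_dom : forall e w, valid (e :: w) -> sdom (he (e :: w)) = hv (gdom e);
  homA_cod : forall e w, valid (e :: w) -> scod (he (e :: w)) = hv (gcod (last e w));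
  homA_mul : forall u v, valid u -> valid v -> valid (u ++ v) ->
               he (u ++ v) = smul (he u) (he v) }.

Definition language (A : graph) (L : seq (gE A) -> Prop) := forall w, L w -> valid w.

Definition factorial_lang (A : graph) (L : seq (gE A) -> Prop) :=
  forall u v : seq (gE A), u <> [::] -> v <> [::] -> L (u ++ v) -> L u /\ L v.

Definition recognizable (V : sgd -> Prop) (A : graph) (L : seq (gE A) -> Prop) :=
  exists (F : sgd) (_ : V F) (phi : homA A F),
    forall w, valid w -> (L w <-> exists l, L l /\ he phi l = he phi w).

Definition concat (A : graph) (K1 K2 : seq (gE A) -> Prop) : seq (gE A) -> Prop :=
  fun w => valid w /\ exists u v, [/\ K1 u, K2 v & w = u ++ v].

Definition concat_closed (V : sgd -> Prop) :=
  forall B : graph, finite_graph B ->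
  forall K1 K2 : seq (gE B) -> Prop, language K1 -> language K2 ->
    recognizable V K1 -> recognizable V K2 -> recognizable V (concat K1 K2).

(* The free pro-V semigroupoid over A: vertices are those of A; an edge is a
   compatible family (x_phi) indexed by all homomorphisms phi : A^+ -> F with
   F in V (the inverse limit of the finite V-images of A^+). *)
Definition agrees (A : graph) (F G : sgd) (phi : homA A F) (psi : shom F G)
  (phi' : homA A G) :=
  (forall a, hv phi' a = hmV psi (hv phi a)) /\
  (forall w, valid w -> he phi' w = hmE psi (he phi w)).

Record pro_edge (A : graph) (V : sgd -> Prop) := ProEdge {
  pe_dom : gV A;
  pe_cod : gV A;
  pe_val : forall (F : sgd), V F -> homA A F -> sE F;
  pe_ends : forall F (HF : V F) (phi : homA A F),
      sdom (pe_val HF phi) = hv phi pe_dom /\ scod (pe_val HF phi) = hv phi pe_cod;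
  pe_compat : forall F G (HF : V F) (HG : V G) (phi : homA A F) (psi : shom F G)
      (phi' : homA A G), agrees phi psi phi' ->
      pe_val HG phi' = hmE psi (pe_val HF phi) }.

Section ProMul.
Variables (A : graph) (V : sgd -> Prop) (u v : pro_edge A V).
Hypothesis Huv : pe_cod u = pe_dom v.
Definition pro_mul_val F (HF : V F) (phi : homA A F) : sE F :=
  smul (pe_val u HF phi) (pe_val v HF phi).
Lemma pro_mul_comp F (HF : V F) (phi : homA A F) :
  scod (pe_val u HF phi) = sdom (pe_val v HF phi).
Proof. by rewrite (pe_ends u HF phi).2 (pe_ends v HF phi).1 Huv. Qed.
Lemma pro_mul_ends F (HF : V F) (phi : homA A F) :
  sdom (pro_mul_val HF phi) = hv phi (pe_dom u) /\
  scod (pro_mul_val HF phi) = hv phi (pe_cod v).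
Proof.
rewrite /pro_mul_val smul_dom ?smul_cod ?pro_mul_comp //.
by rewrite (pe_ends u HF phi).1 (pe_ends v HF phi).2.
Qed.
Lemma pro_mul_compat F G (HF : V F) (HG : V G) (phi : homA A F) (psi : shom F G)
  (phi' : homA A G) : agrees phi psi phi' ->
  pro_mul_val HG phi' = hmE psi (pro_mul_val HF phi).
Proof.
move=> H; rewrite /pro_mul_val (pe_compat u HF HG H) (pe_compat v HF HG H).
by rewrite hm_mul // pro_mul_comp.
Qed.
Definition pro_mul : pro_edge A V :=
  @ProEdge A V (pe_dom u) (pe_cod v) pro_mul_val pro_mul_ends pro_mul_compat.
End ProMul.

Definition pdom (A : graph) (w : seq (gE A)) : option (gV A) :=
  if w is e :: _ then Some (gdom e) else None.
Definition pcod (A : graph) (w : seq (gE A)) : option (gV A) :=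
  if w is e :: w' then Some (gcod (last e w')) else None.

(* Closure of L (embedded via l |-> (phi |-> phi(l))) in the free pro-V
   semigroupoid, for the inverse-limit topology: every basic open
   neighbourhood of x, i.e. a finite intersection of sets
   {y | y_phi = x_phi} (together with the clopen conditions fixing the
   endpoints), meets L. *)
Definition test (A : graph) (V : sgd -> Prop) := {F : sgd & {_ : V F & homA A F}}.

Definition in_closure (A : graph) (V : sgd -> Prop) (L : seq (gE A) -> Prop)
  (x : pro_edge A V) :=
  forall ts : seq (test A V), exists l, [/\ L l, pdom l = Some (pe_dom x),
    pcod l = Some (pe_cod x) &
    forall t, List.In t ts -> he (projT2 (projT2 t)) l = pe_val x (projT1 (projT2 t)) (projT2 (projT2 t))].

(* Main.v *)
From Stdlib Require Import ClassicalEpsilon.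
Require Import Defs.
From mathcomp Require Import all_boot.
Set Implicit Arguments. Unset Strict Implicit. Unset Printing Implicit Defensive.

Lemma valid_cat (A : graph) (w1 w2 : seq (gE A)) :
  valid w1 -> valid w2 -> pcod w1 = pdom w2 -> valid (w1 ++ w2).
Proof.
case: w1 => [|e1 w1] //; case: w2 => [|e2 w2] //= h1 h2 [] h.
by rewrite cat_path h1 /= /adj h eqxx h2.
Qed.

Lemma valid_catl (A : graph) (u v : seq (gE A)) :
  u <> [::] -> v <> [::] -> valid (u ++ v) -> [/\ valid u, valid v & pcod u = pdom v].
Proof.
case: u => [|e u] // _; case: v => [|f v] // _ /=.
rewrite cat_path /= => /and3P [h1 h2 h3]; split => //.
by move: h2; rewrite /adj => /eqP ->.
Qed.

Lemma valid_nil (A : graph) (w : seq (gE A)) : valid w -> w <> [::].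
Proof. by case: w. Qed.

Lemma valid_map (B A : graph) (f : gE B -> gE A) :
  (forall x y, adj x y -> adj (f x) (f y)) ->
  forall w, valid w -> valid (map f w).
Proof.
move=> hf [|e w] //=; elim: w e => [|x w IH] e //= /andP [h1 h2].
by rewrite hf //= IH.
Qed.

Lemma In_enum (T : finType) (x : T) : List.In x (enum T).
Proof.
have : x \in enum T by rewrite mem_enum.
elim: (enum T) => [|y s IH] //=; rewrite in_cons => /orP [/eqP ->|h]; [by left|by right; apply IH].
Qed.

Definition shom_id (S : sgd) : shom S S :=
  @SHom S S id id (fun _ => erefl) (fun _ => erefl) (fun _ _ _ => erefl).

Section Comp.
Variables (S T U : sgd) (f : shom S T) (g : shom T U).
Lemma comp_dom x : sdom (hmE g (hmE f x)) = hmV g (hmV f (sdom x)).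
Proof. by rewrite hm_dom hm_dom. Qed.
Lemma comp_cod x : scod (hmE g (hmE f x)) = hmV g (hmV f (scod x)).
Proof. by rewrite hm_cod hm_cod. Qed.
Lemma comp_mul x y : scod x = sdom y ->
  hmE g (hmE f (smul x y)) = smul (hmE g (hmE f x)) (hmE g (hmE f y)).
Proof. by move=> h; rewrite hm_mul // hm_mul // !hm_dom !hm_cod h. Qed.
Definition shom_comp : shom S U :=
  @SHom S U (fun v => hmV g (hmV f v)) (fun x => hmE g (hmE f x)) comp_dom comp_cod comp_mul.
End Comp.

Section Proj.
Variables S T : sgd.
Definition fst_hom : shom (prod_sgd S T) S :=
  @SHom (prod_sgd S T) S fst fst (fun _ => erefl) (fun _ => erefl)
    (fun x y (h : pcod' x = pdom' y) => erefl).
Definition snd_hom : shom (prod_sgd S T) T :=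
  @SHom (prod_sgd S T) T snd snd (fun _ => erefl) (fun _ => erefl)
    (fun x y (h : pcod' x = pdom' y) => erefl).
End Proj.

Section ProdA.
Variables (A : graph) (F G : sgd) (p : homA A F) (q : homA A G).
Lemma prodA_dom e w : valid (e :: w) ->
  pdom' (he p (e :: w), he q (e :: w)) = (hv p (gdom e), hv q (gdom e)).
Proof. by move=> h; rewrite /pdom' /= !homA_dom. Qed.
Lemma prodA_cod e w : valid (e :: w) ->
  pcod' (he p (e :: w), he q (e :: w)) = (hv p (gcod (last e w)), hv q (gcod (last e w))).
Proof. by move=> h; rewrite /pcod' /= !homA_cod. Qed.
Lemma prodA_mul u v : valid u -> valid v -> valid (u ++ v) ->
  (he p (u ++ v), he q (u ++ v)) = pmul' (he p u, he q u) (he p v, he q v).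
Proof. by move=> h1 h2 h3; rewrite /pmul' /= !homA_mul. Qed.
Definition prodA : homA A (prod_sgd F G) :=
  @HomA A (prod_sgd F G) (fun a => (hv p a, hv q a)) (fun w => (he p w, he q w))
    prodA_dom prodA_cod prodA_mul.
Lemma agrees_fst : agrees prodA (@fst_hom F G) p.
Proof. by split. Qed.
Lemma agrees_snd : agrees prodA (@snd_hom F G) q.
Proof. by split. Qed.
End ProdA.

Lemma agrees_id (A : graph) (F : sgd) (p : homA A F) : agrees p (shom_id F) p.
Proof. by split. Qed.

Lemma agrees_comp (A : graph) (F G H : sgd) (p : homA A F) (q : homA A G) (r : homA A H)
  (f : shom F G) (g : shom G H) : agrees p f q -> agrees q g r -> agrees p (shom_comp f g) r.
Proof.
move=> [h1 h2] [k1 k2]; split => [a|w hw] /=; first by rewrite k1 h1.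
by rewrite k2 // h2.
Qed.

Lemma transfer (A : graph) (V : sgd -> Prop) (x : pro_edge A V) (F G : sgd) (HF : V F) (HG : V G)
  (p : homA A F) (f : shom F G) (q : homA A G) (w : seq (gE A)) :
  agrees p f q -> valid w -> he p w = pe_val x HF p -> he q w = pe_val x HG q.
Proof. by move=> hag hw h; rewrite (proj2 hag) // h (pe_compat x HF HG hag). Qed.

Definition tF (A : graph) (V : sgd -> Prop) (t : test A V) : sgd := projT1 t.
Definition tH (A : graph) (V : sgd -> Prop) (t : test A V) : V (tF t) := projT1 (projT2 t).
Definition tp (A : graph) (V : sgd -> Prop) (t : test A V) : homA A (tF t) := projT2 (projT2 t).

Lemma combine (A : graph) (V : sgd -> Prop) (HV : pseudovariety V) (t0 : test A V) (ts : seq (test A V)) :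
  exists T : test A V, (exists f : shom (tF T) (tF t0), agrees (tp T) f (tp t0)) /\
    forall t, List.In t ts -> exists f : shom (tF T) (tF t), agrees (tp T) f (tp t).
Proof.
elim: ts => [|t ts [T [[f0 hf0] IH]]].
  by exists t0; split => //; exists (shom_id _); apply: agrees_id.
case: HV => _ Hp _.
exists (existT _ (prod_sgd (tF t) (tF T)) (existT _ (Hp _ _ (tH t) (tH T)) (prodA (tp t) (tp T)))).
split.
  exists (shom_comp (@snd_hom _ _) f0); apply: agrees_comp hf0; exact: agrees_snd.
move=> t' [<-|/IH [f hf]]; first by exists (@fst_hom _ _); apply: agrees_fst.
exists (shom_comp (@snd_hom _ _) f); apply: agrees_comp hf; exact: agrees_snd.
Qed.

Definition Triv : sgd :=
  @Sgd unit unit (fun _ => tt) (fun _ => tt) (fun _ _ => tt)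
    (fun _ _ _ => erefl) (fun _ _ _ => erefl) (fun _ _ _ _ _ => erefl).

Lemma Triv_in (V : sgd -> Prop) : contains_N V -> V Triv.
Proof.
move=> HN; apply: HN; split; first by rewrite card_unit.
exists tt; split; first by case.
by exists 0 => x s /size0nil ->; case: x.
Qed.

Section BA.
Variable A : graph.
Definition BA : sgd :=
  @Sgd (gV A) (gV A * gV A)%type fst snd (fun x y => (x.1, y.2))
    (fun _ _ _ => erefl) (fun _ _ _ => erefl) (fun _ _ _ _ _ => erefl).

Lemma divides_triv (S : sgd) (g : shom S Triv) :
  (forall x y : sE S, sdom x = sdom y -> scod x = scod y -> x = y) -> divides S Triv.
Proof.
move=> h; exists S, (shom_id S), g; split.
  by split => [|y]; [exists id|exists y].
by move=> x y h1 h2 _; apply: h.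
Qed.

Definition BA_triv : shom BA Triv :=
  @SHom BA Triv (fun _ => tt) (fun _ => tt) (fun _ => erefl) (fun _ => erefl) (fun _ _ _ => erefl).

Lemma BA_in (V : sgd -> Prop) : pseudovariety V -> contains_N V -> V BA.
Proof.
move=> [Hd _ _] HN; apply: (Hd _ _ (Triv_in HN)).
apply: (@divides_triv BA BA_triv) => [[a b] [c d]] /= -> ->; done.
Qed.

Variable d : gV A.
Definition hdv (w : seq (gE A)) := if w is e :: _ then gdom e else d.
Definition lstv (w : seq (gE A)) := if w is e :: w' then gcod (last e w') else d.
Lemma beta_mul u v : valid u -> valid v -> valid (u ++ v) ->
  (hdv (u ++ v), lstv (u ++ v)) = ((hdv u, lstv u).1, (hdv v, lstv v).2).
Proof. by case: u => [|e u] //; case: v => [|f v] //= _ _ _; rewrite last_cat. Qed.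
Definition beta : homA A BA :=
  @HomA A BA id (fun w => (hdv w, lstv w)) (fun _ _ _ => erefl) (fun _ _ _ => erefl) beta_mul.
End BA.

Lemma ends (A : graph) (V : sgd -> Prop) (x : pro_edge A V) (d : gV A) (H : V (BA A))
  (w : seq (gE A)) : valid w -> he (beta d) w = pe_val x H (beta d) ->
  pdom w = Some (pe_dom x) /\ pcod w = Some (pe_cod x).
Proof.
case: w => [|e w] // hw h; have [h1 h2] := pe_ends x H (beta d).
by rewrite -h in h1 h2; split; congr Some.
Qed.

Section Image.
Variables (A : graph) (G : sgd) (chi : homA A G).
Hypothesis sep : forall w1 w2, valid w1 -> valid w2 ->
  scod (he chi w1) = sdom (he chi w2) -> valid (w1 ++ w2).
Definition Pim (s : sE G) := exists w, valid w /\ he chi w = s.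
Definition pb (s : sE G) : bool := if excluded_middle_informative (Pim s) then true else false.
Lemma pbE s : pb s <-> Pim s.
Proof. by rewrite /pb; case: excluded_middle_informative. Qed.
Definition IE := {s : sE G | pb s}.
Lemma pb_mul (a b : IE) : scod (val a) = sdom (val b) -> pb (smul (val a) (val b)).
Proof.
case: a => a ha; case: b => b hb /= h.
move/pbE: ha => [w1 [v1 e1]]; move/pbE: hb => [w2 [v2 e2]].
apply/pbE; exists (w1 ++ w2); rewrite -e1 -e2 in h *.
have vc := sep v1 v2 h; split => //; exact: homA_mul.
Qed.
Definition imul (a b : IE) : IE :=
  if scod (val a) == sdom (val b) then insubd a (smul (val a) (val b)) else a.
Lemma imulE a b : scod (val a) = sdom (val b) -> val (imul a b) = smul (val a) (val b).
Proof. by move=> h; rewrite /imul h eqxx val_insubd pb_mul. Qed.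
Definition idom (a : IE) := sdom (val a).
Definition icod (a : IE) := scod (val a).
Lemma imul_dom x y : icod x = idom y -> idom (imul x y) = idom x.
Proof. by move=> h; rewrite /idom imulE // smul_dom. Qed.
Lemma imul_cod x y : icod x = idom y -> icod (imul x y) = icod y.
Proof. by move=> h; rewrite /icod imulE // smul_cod. Qed.
Lemma imul_assoc x y z : icod x = idom y -> icod y = idom z ->
  imul (imul x y) z = imul x (imul y z).
Proof.
move=> h1 h2; apply: val_inj.
have h3 : icod (imul x y) = idom z by rewrite imul_cod.
have h4 : icod x = idom (imul y z) by rewrite imul_dom.
by rewrite imulE // imulE // imulE // imulE // smul_assoc.
Qed.
Definition Img : sgd := @Sgd (sV G) IE idom icod imul imul_dom imul_cod imul_assoc.

Definition incl : shom Img G :=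
  @SHom Img G id val (fun _ => erefl) (fun _ => erefl) imulE.

Lemma Img_in (V : sgd -> Prop) : pseudovariety V -> V G -> V Img.
Proof.
move=> [Hd _ _] HG; apply: (Hd _ _ HG); exists Img, (shom_id Img), incl; split.
  by split => [|y]; [exists id|exists y].
by move=> x y _ _; apply: val_inj.
Qed.

Variable w0 : seq (gE A).
Hypothesis vw0 : valid w0.
Definition s0 : IE := exist _ (he chi w0) (proj2 (pbE _) (ex_intro _ w0 (conj vw0 erefl))).
Lemma pb_he w : valid w -> pb (he chi w).
Proof. by move=> h; apply/pbE; exists w. Qed.
Definition ihe w : IE := insubd s0 (he chi w).
Lemma iheE w : valid w -> val (ihe w) = he chi w.
Proof. by move=> h; rewrite /ihe val_insubd pb_he. Qed.
Lemma ihom_dom e w : valid (e :: w) -> idom (ihe (e :: w)) = hv chi (gdom e).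
Proof. by move=> h; rewrite /idom iheE // homA_dom. Qed.
Lemma ihom_cod e w : valid (e :: w) -> icod (ihe (e :: w)) = hv chi (gcod (last e w)).
Proof. by move=> h; rewrite /icod iheE // homA_cod. Qed.
Lemma ihom_mul u v : valid u -> valid v -> valid (u ++ v) -> ihe (u ++ v) = imul (ihe u) (ihe v).
Proof.
move=> h1 h2 h3; apply: val_inj.
have [_ _ hc] := valid_catl (valid_nil h1) (valid_nil h2) h3.
have hc' : scod (val (ihe u)) = sdom (val (ihe v)).
  rewrite !iheE //; move: h1 h2 hc; clear h3; case: u => [|e u] //; case: v => [|f v] //= h1 h2 [] hc.
  by rewrite homA_cod // homA_dom // hc.
by rewrite imulE // !iheE // homA_mul.
Qed.
Definition ihom : homA A Img := @HomA A Img (hv chi) ihe ihom_dom ihom_cod ihom_mul.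
Lemma agrees_incl : agrees ihom incl chi.
Proof. by split => // w hw /=; rewrite iheE. Qed.
End Image.

Lemma image_dense (A : graph) (V : sgd -> Prop) (HV : pseudovariety V) (x : pro_edge A V)
  (G : sgd) (HG : V G) (chi : homA A G) (w0 : seq (gE A)) (vw0 : valid w0) :
  (forall w1 w2, valid w1 -> valid w2 -> scod (he chi w1) = sdom (he chi w2) -> valid (w1 ++ w2)) ->
  exists w, valid w /\ he chi w = pe_val x HG chi.
Proof.
move=> sep; have HI := Img_in sep HV HG.
rewrite (pe_compat x HI HG (agrees_incl sep vw0)).
by case: (pe_val x HI (ihom sep vw0)) => s hs /=; apply/pbE.
Qed.

Lemma density (A : graph) (V : sgd -> Prop) (HV : pseudovariety V) (HN : contains_N V)
  (w0 : seq (gE A)) (vw0 : valid w0) (x : pro_edge A V) (F : sgd) (HF : V F) (psi : homA A F) :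
  exists w, [/\ valid w, pdom w = Some (pe_dom x), pcod w = Some (pe_cod x) & he psi w = pe_val x HF psi].
Proof.
have HB := BA_in A HV HN.
have HG : V (prod_sgd F (BA A)) by case: HV => _ Hp _; apply: Hp.
set chi := prodA psi (beta (pe_dom x)).
have sep : forall w1 w2, valid w1 -> valid w2 -> scod (he chi w1) = sdom (he chi w2) -> valid (w1 ++ w2).
  move=> [|e1 w1] [|e2 w2] // v1 v2 [] _ h; apply: valid_cat => //=; by rewrite h.
have [w [hw hc]] := image_dense HV x HG vw0 sep.
have h1 := transfer HF (agrees_fst psi (beta (pe_dom x))) hw hc.
have h2 := transfer HB (agrees_snd psi (beta (pe_dom x))) hw hc.
have [e1 e2] := ends hw h2.
by exists w; split.
Qed.

Lemma he_map_eq (A : graph) (F : sgd) (phi : homA A F) (g : gE A -> gE A) :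
  (forall e, gdom (g e) = gdom e) -> (forall e, gcod (g e) = gcod e) ->
  (forall e, he phi [:: g e] = he phi [:: e]) ->
  forall w, valid w -> he phi (map g w) = he phi w.
Proof.
move=> hd hc hp [|e w] // hv.
have va : forall x y, adj x y -> adj (g x) (g y) by move=> x y; rewrite /adj hd hc.
elim: w e hv => [|f w IH] e hv; first exact: hp.
have hs : e :: f :: w = [:: e] ++ f :: w by [].
have [_ v2 _] := valid_catl (A:=A) (u:=[:: e]) (v := f :: w) (fun h => ltac:(done)) (fun h => ltac:(done)) hv.
rewrite hs map_cat homA_mul //; last by rewrite -map_cat; apply: valid_map.
  by rewrite homA_mul // hp IH.
by apply: valid_map.
Qed.

Section Quot.
Variables (A : graph) (F : sgd) (phi : homA A F).
Definition realized (t : gV A * sE F * gV A) :=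
  exists e, [/\ gdom e = t.1.1, he phi [:: e] = t.1.2 & gcod e = t.2].
Definition rb t : bool := if excluded_middle_informative (realized t) then true else false.
Lemma rbE t : rb t <-> realized t.
Proof. by rewrite /rb; case: excluded_middle_informative. Qed.
Local Notation BE := {t : gV A * sE F * gV A | rb t}.
Definition Bg : graph := @Graph (gV A) BE (fun t => (val t).1.1) (fun t => (val t).2).
Definition wit (t : BE) : gE A :=
  proj1_sig (constructive_indefinite_description _ (proj1 (rbE _) (valP t))).
Lemma wit_spec t : [/\ gdom (wit t) = (val t).1.1, he phi [:: wit t] = (val t).1.2 & gcod (wit t) = (val t).2].
Proof. rewrite /wit; case: constructive_indefinite_description => e he' /=; exact: he'. Qed.
Lemma mu_real (e : gE A) : rb (gdom e, he phi [:: e], gcod e).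
Proof. by apply/rbE; exists e. Qed.
Definition mu (e : gE A) : gE Bg := exist _ (gdom e, he phi [:: e], gcod e) (mu_real e).

Lemma fin_Bg : finite_graph Bg.
Proof. by exists (enum (@predT BE)) => e; have := In_enum e; rewrite enumT. Qed.

Lemma adj_wit (x y : gE Bg) : adj x y -> adj (wit x) (wit y).
Proof.
rewrite /adj /=; have [_ _ ->] := wit_spec x; by have [-> _ _] := wit_spec y.
Qed.
Lemma adj_mu (x y : gE A) : adj x y -> adj (mu x) (mu y).
Proof. by []. Qed.

Lemma phiB_dom (e : gE Bg) (w : seq (gE Bg)) : valid (e :: w) -> sdom (he phi (map wit (e :: w))) = hv phi (gdom e).
Proof.
move=> h; have := valid_map adj_wit h => /= h'; rewrite homA_dom //.
by have [-> _ _] := wit_spec e.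
Qed.
Lemma phiB_cod (e : gE Bg) (w : seq (gE Bg)) : valid (e :: w) -> scod (he phi (map wit (e :: w))) = hv phi (gcod (last e w)).
Proof.
move=> h; have := valid_map adj_wit h => /= h'; rewrite homA_cod // last_map.
by have [_ _ ->] := wit_spec (last e w).
Qed.
Lemma phiB_mul (u v : seq (gE Bg)) : valid u -> valid v -> valid (u ++ v) ->
  he phi (map wit (u ++ v)) = smul (he phi (map wit u)) (he phi (map wit v)).
Proof.
move=> h1 h2 h3; have k1 := valid_map adj_wit h1; have k2 := valid_map adj_wit h2.
have k3 := valid_map adj_wit h3; rewrite map_cat in k3.
by rewrite map_cat homA_mul.
Qed.
Definition phiB : homA Bg F := @HomA Bg F (hv phi) (fun w => he phi (map wit w)) phiB_dom phiB_cod phiB_mul.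

Lemma phiB_mu (w : seq (gE A)) : valid w -> he phiB (map mu w) = he phi w.
Proof.
move=> h /=; rewrite -map_comp; apply: he_map_eq => // e /=.
- by have [-> _ _] := wit_spec (mu e).
- by have [_ _ ->] := wit_spec (mu e).
- by have [_ -> _] := wit_spec (mu e).
Qed.

Variables (G : sgd) (chi : homA Bg G).
Lemma pull_dom (e : gE A) (w : seq (gE A)) : valid (e :: w) -> sdom (he chi (map mu (e :: w))) = hv chi (gdom e).
Proof. by move=> h; rewrite homA_dom //; apply: (valid_map adj_mu h). Qed.
Lemma pull_cod (e : gE A) (w : seq (gE A)) : valid (e :: w) -> scod (he chi (map mu (e :: w))) = hv chi (gcod (last e w)).
Proof.
move=> h; rewrite homA_cod /=; last by apply: (valid_map adj_mu h).
by rewrite last_map.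
Qed.
Lemma pull_mul (u v : seq (gE A)) : valid u -> valid v -> valid (u ++ v) ->
  he chi (map mu (u ++ v)) = smul (he chi (map mu u)) (he chi (map mu v)).
Proof.
move=> h1 h2 h3; have k1 := valid_map adj_mu h1; have k2 := valid_map adj_mu h2.
have k3 := valid_map adj_mu h3; rewrite map_cat in k3.
by rewrite map_cat homA_mul.
Qed.
Definition pull : homA A G := @HomA A G (hv chi) (fun w => he chi (map mu w)) pull_dom pull_cod pull_mul.
End Quot.

Section Core.
Variables (A : graph) (V : sgd -> Prop) (HV : pseudovariety V) (HN : contains_N V)
  (L : seq (gE A) -> Prop) (HL : language L) (Hfact : factorial_lang L)
  (w0 : seq (gE A)) (vw0 : valid w0)
  (u v : pro_edge A V) (Huv : pe_cod u = pe_dom v).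

Lemma pair_dense (F : sgd) (HF : V F) (phi : homA A F) (F' : sgd) (HF' : V F') (psi : homA A F') :
  exists wu wv, [/\ valid wu, valid wv, valid (wu ++ wv),
    he phi wu = pe_val u HF phi /\ he phi wv = pe_val v HF phi &
    he psi wu = pe_val u HF' psi /\ he psi wv = pe_val v HF' psi].
Proof.
have [T [[f0 hf0] H]] := combine HV (existT _ F (existT _ HF phi))
   [:: existT _ F' (existT _ HF' psi)].
have [f hf] := H _ (or_introl erefl).
have [wu [vu du cu eu]] := density HV HN vw0 u (tH T) (tp T).
have [wv [vv dv cv ev]] := density HV HN vw0 v (tH T) (tp T).
exists wu, wv; split => //.
- by apply: valid_cat => //; rewrite cu dv Huv.
- by split; [apply: (transfer HF hf0 vu eu) | apply: (transfer HF hf0 vv ev)].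
- by split; [apply: (transfer HF' hf vu eu) | apply: (transfer HF' hf vv ev)].
Qed.

Hypothesis Hcl : in_closure L (pro_mul Huv).

Lemma cl_one (F' : sgd) (HF' : V F') (psi : homA A F') :
  exists l, L l /\ he psi l = smul (pe_val u HF' psi) (pe_val v HF' psi).
Proof.
have [l [hl _ _ H]] := Hcl [:: existT _ F' (existT _ HF' psi)].
by exists l; split => //; apply: (H _ (or_introl erefl)).
Qed.

Lemma core_rec (Hr : recognizable V L) (F : sgd) (HF : V F) (phi : homA A F) :
  exists l1 l2, [/\ L l1, L l2, he phi l1 = pe_val u HF phi & he phi l2 = pe_val v HF phi].
Proof.
have [Fr [HFr [phir Hrec]]] := Hr.
have [wu [wv [vu vv vc [e1 e2] [e3 e4]]]] := pair_dense HF phi HFr phir.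
have [l [hl el]] := cl_one HFr phir.
have hc : L (wu ++ wv).
  apply/(Hrec _ vc); exists l; split => //.
  by rewrite el homA_mul // e3 e4.
have [h1 h2] := Hfact (valid_nil vu) (valid_nil vv) hc.
by exists wu, wv.
Qed.

Lemma core_cc (Hc : concat_closed V) (F : sgd) (HF : V F) (phi : homA A F) :
  exists l1 l2, [/\ L l1, L l2, he phi l1 = pe_val u HF phi & he phi l2 = pe_val v HF phi].
Proof.
pose K1 := fun w : seq (gE (Bg phi)) => valid w /\ he (phiB phi) w = pe_val u HF phi.
pose K2 := fun w : seq (gE (Bg phi)) => valid w /\ he (phiB phi) w = pe_val v HF phi.
have lK1 : language K1 by move=> w [].
have lK2 : language K2 by move=> w [].
have rK1 : recognizable V K1.
  exists F, HF, (phiB phi) => w hw; split => [h|[l [[_ h1] h2]]]; first by exists w.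
  by split => //; rewrite -h2.
have rK2 : recognizable V K2.
  exists F, HF, (phiB phi) => w hw; split => [h|[l [[_ h1] h2]]]; first by exists w.
  by split => //; rewrite -h2.
have [F' [HF' [chi Hrec]]] := Hc _ (fin_Bg phi) K1 K2 lK1 lK2 rK1 rK2.
set psi := pull chi.
have [wu [wv [vu vv vc [e1 e2] [e3 e4]]]] := pair_dense HF phi HF' psi.
have [l [hl el]] := cl_one HF' psi.
have vl := HL hl.
have vmu : forall w, valid w -> valid (map (mu phi) w) := fun w h => valid_map (@adj_mu _ _ phi) h.
have vml := vmu _ vl.
have : concat K1 K2 (map (mu phi) l).
  apply/(Hrec _ vml); exists (map (mu phi) (wu ++ wv)); split.
    split; first exact: vmu.
    exists (map (mu phi) wu), (map (mu phi) wv); split; last by rewrite map_cat.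
      by split; [apply: vmu | rewrite phiB_mu].
    by split; [apply: vmu | rewrite phiB_mu].
  have : he psi l = he psi (wu ++ wv) by rewrite el homA_mul // e3 e4.
  by [].
move=> [_ [k1 [k2 [[vk1 hk1] [vk2 hk2] hk]]]].
set n := size k1.
have ht : map (mu phi) (take n l) = k1 by rewrite map_take hk take_size_cat.
have hd : map (mu phi) (drop n l) = k2 by rewrite map_drop hk drop_size_cat.
have nt : take n l <> [::] by move=> h; move: vk1; rewrite -ht h.
have nd : drop n l <> [::] by move=> h; move: vk2; rewrite -hd h.
have [L1 L2] := Hfact nt nd (eq_ind_r L hl (cat_take_drop n l)).
exists (take n l), (drop n l); split => //.
- by rewrite -(phiB_mu phi (HL L1)) ht.
- by rewrite -(phiB_mu phi (HL L2)) hd.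
Qed.
End Core.

Lemma finish (A : graph) (V : sgd -> Prop) (HV : pseudovariety V) (HN : contains_N V)
  (L : seq (gE A) -> Prop) (HL : language L) (x : pro_edge A V)
  (core : forall F (HF : V F) (phi : homA A F), exists l, L l /\ he phi l = pe_val x HF phi) :
  in_closure L x.
Proof.
move=> ts; have HB := BA_in A HV HN.
have [T [[f0 hf0] H]] := combine HV (existT _ (BA A) (existT _ HB (beta (pe_dom x)))) ts.
have [l [hl el]] := core _ (tH T) (tp T).
have vl := HL _ hl.
have [d1 d2] := ends vl (transfer HB hf0 vl el).
exists l; split => // t ht.
have [f hf] := H t ht.
exact: (transfer (tH t) hf vl el).
Qed.

Theorem mainTheorem8 (A : graph) (V : sgd -> Prop)
  (HV : pseudovariety V) (HN : contains_N V)
  (L : seq (gE A) -> Prop) (HL : language L) (Hfact : factorial_lang L)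
  (Hcase : recognizable V L \/ concat_closed V) :
  forall (u v : pro_edge A V) (Huv : pe_cod u = pe_dom v),
    in_closure L (pro_mul Huv) -> in_closure L u /\ in_closure L v.
Proof.
move=> u v Huv Hcl.
have [l0 [hl0 _ _ _]] := Hcl [::].
have vw0 := HL _ hl0.
have core : forall F (HF : V F) (phi : homA A F), exists l1 l2,
    [/\ L l1, L l2, he phi l1 = pe_val u HF phi & he phi l2 = pe_val v HF phi].
  case: Hcase => Hc F HF phi.
    exact: (core_rec HV HN Hfact vw0 Hcl Hc).
  exact: (core_cc HV HN HL Hfact vw0 Hcl Hc).
split; apply: (finish HV HN HL) => F HF phi; have [l1 [l2 [h1 h2 e1 e2]]] := core F HF phi.
  by exists l1.
by exists l2.
Qed.
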